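(* For every positive integer $k$, in any election there exists a $\frac{9.8217}{k}$-undominated committee of size $k$.
   Context: An election consists of a finite set $V$ of $n$ voters, a finite set $C$ of $m$ candidates, and for each voter $v$ a strict linear order $\succ_v$ on $C$. A committee is a subset $S \subseteq C$. For a candidate $a$ and committee $S$, write $a \succ_v S$ if $v$ prefers $a$ to every member of $S$, and let $\frac1n|a \succ S| = \frac1n|\{v \in V : a \succ_v S\}|$. A committee $S$ is $\alpha$-undominated if for every candidate $a \in C$, $\frac1n|a \succ S| < \alpha$. *)

(* Defs.v *)
From mathcomp Require Import all_boot all_order all_algebra.
Set Implicit Arguments. Unset Strict Implicit. Unset Printing Implicit Defensive.
Import GRing.Theory Num.Theory.
Local Open Scope ring_scope.

Definition strict_linear_order (C : finType) (r : rel C) : Prop :=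
  irreflexive r /\ transitive r /\ (forall a b, a != b -> r a b || r b a).

(* An election: voters V, candidates C, each voter v has a strict linear
   order [pref v] ; [pref v a b] means v strictly prefers a to b. *)
Definition election (V C : finType) (pref : V -> rel C) : Prop :=
  forall v, strict_linear_order (pref v).

Definition prefers_to_set (V C : finType) (pref : V -> rel C)
  (v : V) (a : C) (S : {set C}) : bool :=
  [forall b in S, pref v a b].

Definition dom_frac (V C : finType) (pref : V -> rel C) (a : C) (S : {set C}) : rat :=
  (#|[set v | prefers_to_set pref v a S]|)%:R / (#|V|)%:R.

Definition undominated (V C : finType) (pref : V -> rel C) (alpha : rat) (S : {set C}) : Prop :=
  forall a : C, dom_frac pref a S < alpha.

(* Main.v *)
Require Import Defs.
From mathcomp Require Import all_boot all_order all_algebra perm.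
From mathcomp Require Import zify ring lra.
Set Implicit Arguments. Unset Strict Implicit. Unset Printing Implicit Defensive.
Import Order.TTheory GRing.Theory Num.Theory.
Local Open Scope ring_scope.

Lemma avg_exists (I : finType) (p X : I -> rat) (B : rat) :
  (forall i, 0 <= p i) -> \sum_i p i = 1 -> \sum_i p i * X i <= B ->
  exists i, X i <= B.
Proof.
move=> p0 p1 HB; case: (pickP (fun i => X i <= B)) => [i Hi|H]; first by exists i.
exfalso.
have H' : forall i, B < X i by move=> i; rewrite ltNge H.
have e : \sum_i p i * (X i - B) = \sum_i p i * X i - B.
  by rewrite -[in RHS](mul1r B) -p1 mulr_suml -sumrB; apply: eq_bigr => i _; rewrite mulrBr.
have ge0 : forall i, true -> 0 <= p i * (X i - B).
  by move=> i _; rewrite mulr_ge0 // subr_ge0 ltW.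
have s0 : \sum_i p i * (X i - B) = 0.
  apply/eqP; rewrite eq_le sumr_ge0 // andbT e subr_le0 //.
have : \sum_i p i = 0.
  apply: big1 => i _; have := @psumr_eq0P _ _ _ _ ge0 s0 i erefl.
  by move/eqP; rewrite mulf_eq0 subr_eq0 (gt_eqF (H' i)) orbF => /eqP.
by rewrite p1 => /eqP; rewrite oner_eq0.
Qed.

Lemma pad (C : finType) (S : {set C}) (k : nat) :
  (#|S| <= k <= #|C|)%N -> exists S' : {set C}, S \subset S' /\ #|S'| = k.
Proof.
move=> /andP [].
move Hd : (k - #|S|)%N => d; elim: d S Hd => [|d IH] S Hd Hle Hk.
  by exists S; split => //; apply/eqP; rewrite eqn_leq Hle /=; lia.
have Hlt : (#|S| < #|C|)%N by lia.
case: (pickP [pred c | c \notin S]) => [c /= cS | H]; last first.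
  have e : S = setT by apply/setP => c; rewrite inE; have := H c => /=; case: (c \in S).
  by move: Hlt; rewrite e cardsT ltnn.
have Hd' : (k - #|c |: S|)%N = d by rewrite cardsU1 cS /=; lia.
have Hle' : (#|c |: S| <= k)%N by rewrite cardsU1 cS /=; lia.
have [S' [sub cS']] := IH _ Hd' Hle' Hk.
by exists S'; split => //; apply: subset_trans sub; apply: subsetUr.
Qed.

Section Basic.
Variables (V C : finType) (pref : V -> rel C).
Hypothesis Hel : election pref.

Definition dom v a S := prefers_to_set pref v a S.

Lemma dom_sub v a (S S' : {set C}) : S \subset S' -> dom v a S' -> dom v a S.
Proof.
move=> sub /forallP H; apply/forallP => b; apply/implyP => bS.
by have := H b; rewrite (subsetP sub b bS).
Qed.

Definition Dset v S := [set a | dom v a S].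

Lemma Dset_nested v S S' : (Dset v S \subset Dset v S') || (Dset v S' \subset Dset v S).
Proof.
have [irr [tr tot]] := Hel v.
apply/negPn/negP; rewrite negb_or => /andP [/subsetPn [a aS aS'] /subsetPn [b bS' bS]].
move: aS aS' bS' bS; rewrite !inE => aS aS' bS' bS.
have ab : a != b by apply/eqP => e; move: aS bS; rewrite e => ->.
case/orP: (tot a b ab) => Hab.
- move/negP: aS'; apply; apply/forallP => c; apply/implyP => cS.
  by apply: (tr b) => //; move/forallP: bS' => /(_ c); rewrite cS.
- move/negP: bS; apply; apply/forallP => c; apply/implyP => cS.
  by apply: (tr a) => //; move/forallP: aS => /(_ c); rewrite cS.
Qed.

Definition u (w : V -> rat) (S : {set C}) a := \sum_v w v * (dom v a S)%:R.
Definition Wt (w : V -> rat) := \sum_v w v.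

Lemma u_ge0 w S a : (forall v, 0 <= w v) -> 0 <= u w S a.
Proof. by move=> w0; apply: sumr_ge0 => v _; rewrite mulr_ge0. Qed.

Lemma u_leW w S a : (forall v, 0 <= w v) -> u w S a <= Wt w.
Proof.
move=> w0; apply: ler_sum => v _; case: (dom _ _ _) => /=; rewrite ?mulr1 ?mulr0 //.
Qed.

End Basic.

Section BR.
Variables (V C : finType) (pref : V -> rel C).
Hypothesis Hel : election pref.
Variables (w : V -> rat) (q : C -> rat) (K : nat).
Hypothesis w0 : forall v, 0 <= w v.
Hypothesis q0 : forall c, 0 <= q c.
Hypothesis q1 : \sum_c q c = 1.

Definition pi (f : {ffun 'I_K.+1 -> C}) := \prod_i q (f i).
Definition best v (f : {ffun 'I_K.+1 -> C}) i :=
  [forall j, (j != i) ==> pref v (f i) (f j)].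

Lemma pi_ge0 f : 0 <= pi f.
Proof. by apply: prodr_ge0 => i _. Qed.

Lemma pi_sum : \sum_f pi f = 1.
Proof.
rewrite /pi -(bigA_distr_bigA (fun (i : 'I_K.+1) c => q c)) /=.
by rewrite prodr_const q1 expr1n.
Qed.

Lemma best_uniq v f i j : best v f i -> best v f j -> i = j.
Proof.
have [irr [tr _]] := Hel v.
move=> /forallP Hi /forallP Hj; apply/eqP; apply/negPn/negP => ne.
have := Hi j; rewrite eq_sym ne /= => h1.
have := Hj i; rewrite ne /= => h2.
by have := tr _ _ _ h1 h2; rewrite irr.
Qed.

Lemma sum_best v f : \sum_i (best v f i)%:R <= 1 :> rat.
Proof.
case: (pickP (best v f)) => [i Hi|H].
  rewrite (bigD1 i) //= Hi big1 ?addr0 // => j ji.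
  case Hj: (best v f j) => //; by move: ji; rewrite (best_uniq Hj Hi) eqxx.
by rewrite big1 // => i _; rewrite H.
Qed.

Lemma sym v i : \sum_f pi f * (best v f ord0)%:R = \sum_f pi f * (best v f i)%:R.
Proof.
pose s := tperm ord0 i.
pose h (f : {ffun 'I_K.+1 -> C}) := [ffun j => f (s j)].
have hK : involutive h by move=> f; apply/ffunP => j; rewrite !ffunE tpermK.
rewrite (reindex_inj (inv_inj hK)) /=; apply: eq_bigr => f _.
congr (_ * _).
  rewrite /pi [RHS](reindex_inj (@perm_inj _ s)) /=; apply: eq_bigr => j _.
  by rewrite ffunE.
congr ((nat_of_bool _)%:R); rewrite /best ffunE tpermL.
have e : forall j, (s j != ord0) = (j != i).
  by move=> j; rewrite -{1}(tpermR ord0 i) (inj_eq (@perm_inj _ s)).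
apply/idP/idP => /forallP H; apply/forallP => j.
  by have := H (s j); rewrite ffunE tpermK e.
have e2 : (s j != i) = (j != ord0).
  by rewrite -{1}(tpermL ord0 i) (inj_eq (@perm_inj _ s)).
by have := H (s j); rewrite ffunE e2.
Qed.

Lemma best0_bound v : \sum_f pi f * (best v f ord0)%:R <= (K.+1%:R)^-1.
Proof.
have H : (K.+1)%:R * \sum_f pi f * (best v f ord0)%:R <= 1.
  have -> : (K.+1)%:R * \sum_f pi f * (best v f ord0)%:R
          = \sum_(i : 'I_K.+1) \sum_f pi f * (best v f i)%:R.
    transitivity (\sum_(i : 'I_K.+1) \sum_f pi f * (best v f ord0)%:R).
      by rewrite sumr_const card_ord mulr_natl.
    by apply: eq_bigr => i _; rewrite (sym v i).
  rewrite exchange_big /=; apply: le_trans (_ : \sum_f pi f <= 1); last by rewrite pi_sum.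
  apply: ler_sum => f _.
  by rewrite -mulr_sumr; apply: ler_piMr; [apply: pi_ge0 | apply: sum_best].
have hp : 0 < K.+1%:R :> rat by rewrite ltr0Sn.
by rewrite -[_^-1]mul1r ler_pdivlMr // mulrC.
Qed.

Definition Sf (f : {ffun 'I_K.+1 -> C}) : {set C} := [set f j | j in [set~ ord0]].

Lemma best_dom v f : best v f ord0 = dom pref v (f ord0) (Sf f).
Proof.
apply/idP/idP => [/forallP H | /forallP H].
  apply/forallP => b; apply/implyP => /imsetP [j]; rewrite !inE => jn ->.
  by have := H j; rewrite jn.
apply/forallP => j; apply/implyP => jn.
have := H (f j); rewrite (_ : f j \in Sf f) //.
by apply/imsetP; exists j; rewrite // !inE.
Qed.

Lemma sum_u_bound : \sum_f pi f * u pref w (Sf f) (f ord0) <= Wt w / K.+1%:R.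
Proof.
rewrite /u.
have -> : \sum_f pi f * \sum_v w v * (dom pref v (f ord0) (Sf f))%:R
   = \sum_v w v * \sum_f pi f * (best v f ord0)%:R.
  under eq_bigr do rewrite mulr_sumr.
  rewrite exchange_big /=; apply: eq_bigr => v _; rewrite mulr_sumr.
  by apply: eq_bigr => f _; rewrite best_dom mulrCA.
rewrite /Wt mulr_suml; apply: ler_sum => v _.
by apply: ler_wpM2l => //; apply: best0_bound.
Qed.

Definition upd (f : {ffun 'I_K.+1 -> C}) c : {ffun 'I_K.+1 -> C} :=
  [ffun j => if j == ord0 then c else f j].

Lemma Sf_upd f c : Sf (upd f c) = Sf f.
Proof. by apply: eq_in_imset => j; rewrite !inE => /negbTE jn; rewrite ffunE jn. Qed.

Lemma pi_upd f c : pi f * q c = pi (upd f c) * q (f ord0).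
Proof.
rewrite /pi (bigD1 ord0) //= [in RHS](bigD1 ord0) //= ffunE eqxx.
have -> : \prod_(j | j != ord0) q (upd f c j) = \prod_(j | j != ord0) q (f j).
  by apply: eq_bigr => j /negbTE jn; rewrite ffunE jn.
ring.
Qed.

Lemma updK f c : upd (upd f c) (f ord0) = f.
Proof. by apply/ffunP => j; rewrite !ffunE; case: eqP => // ->. Qed.

Lemma upd0 f c : upd f c ord0 = c.
Proof. by rewrite ffunE eqxx. Qed.

Lemma identity (G : {set C} -> C -> rat) :
  \sum_f pi f * G (Sf f) (f ord0) = \sum_f pi f * \sum_a q a * G (Sf f) a.
Proof.
have -> : \sum_f pi f * \sum_a q a * G (Sf f) a = \sum_f \sum_a pi f * q a * G (Sf f) a.
  by apply: eq_bigr => f _; rewrite mulr_sumr; apply: eq_bigr => a _; rewrite mulrA.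
rewrite pair_bigA /=.
pose sg (p : {ffun 'I_K.+1 -> C} * C) := (upd p.1 p.2, p.1 ord0).
have sgK : involutive sg by case=> f c; rewrite /sg /= updK upd0.
rewrite (reindex_inj (inv_inj sgK)) /=.
transitivity (\sum_f \sum_a pi f * G (Sf f) (f ord0) * q a).
  by apply: eq_bigr => f _; rewrite -mulr_sumr q1 mulr1.
rewrite pair_bigA /=; apply: eq_bigr => [[f c]] _ /=.
by rewrite Sf_upd -pi_upd mulrAC.
Qed.

Lemma best_response : (K <= #|C|)%N ->
  exists S : {set C}, #|S| = K /\ \sum_a q a * u pref w S a <= Wt w / K.+1%:R.
Proof.
move=> HK.
have [|f Hf] := @avg_exists _ pi (fun f => \sum_a q a * u pref w (Sf f) a) (Wt w / K.+1%:R) pi_ge0 pi_sum.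
  by rewrite -identity sum_u_bound.
have Hp : (#|Sf f| <= K <= #|C|)%N.
  rewrite HK andbT; apply: leq_trans (leq_imset_card _ _) _.
  by rewrite cardsC1 card_ord.
have [S' [sub cS']] := pad Hp.
exists S'; split => //; apply: le_trans Hf; apply: ler_sum => a _.
apply: ler_wpM2l => //; apply: ler_sum => v _; apply: ler_wpM2l => //.
by case E: (dom pref v a S') => //=; rewrite (dom_sub sub E).
Qed.

End BR.

Section RM.
Variables (C : finType) (U : {set C} -> C -> rat) (W B0 : rat) (K : nat).
Hypothesis U0 : forall S a, 0 <= U S a.
Hypothesis UW : forall S a, U S a <= W.
Hypothesis BRex : forall q : {ffun C -> rat}, (forall a, 0 <= q a) -> \sum_a q a = 1 ->
  exists S : {set C}, #|S| = K /\ \sum_a q a * U S a <= B0.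
Hypothesis Cn : (0 < #|C|)%N.
Implicit Types R : {ffun C -> rat}.

Definition BRP (q : {ffun C -> rat}) (S : {set C}) := (#|S| == K) && (\sum_a q a * U S a <= B0).
Definition BR q := odflt set0 [pick S | BRP q S].

Lemma BR_spec (q : {ffun C -> rat}) : (forall a, 0 <= q a) -> \sum_a q a = 1 ->
  #|BR q| = K /\ \sum_a q a * U (BR q) a <= B0.
Proof.
move=> q0 q1; rewrite /BR; case: pickP => [S /andP [/eqP -> ->] // | H].
have [S [cS HS]] := BRex q0 q1.
by have := H S; rewrite /BRP cS eqxx HS.
Qed.

Definition pos (x : rat) := if 0 <= x then x else 0.
Lemma pos_ge0 x : 0 <= pos x.
Proof. by rewrite /pos; case: ifP. Qed.

Definition qof (R : {ffun C -> rat}) : {ffun C -> rat} :=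
  if 0 < \sum_a pos (R a) then [ffun a => pos (R a) / \sum_b pos (R b)]
  else [ffun a => (#|C|%:R)^-1].

Lemma qof_ge0 R a : 0 <= qof R a.
Proof.
rewrite /qof; case: ifP => H; rewrite ffunE.
  by rewrite divr_ge0 ?pos_ge0 // ltW.
by rewrite invr_ge0.
Qed.

Lemma qof_sum R : \sum_a qof R a = 1.
Proof.
rewrite /qof; case: ifP => H.
  under eq_bigr do rewrite ffunE.
  by rewrite -mulr_suml divff // gt_eqF.
under eq_bigr do rewrite ffunE.
rewrite sumr_const -[RHS](@mulVf _ (#|C|%:R)); first by rewrite mulr_natr.
by rewrite pnatr_eq0 -lt0n.
Qed.

Definition val R := \sum_b qof R b * U (BR (qof R)) b.
Definition step R : {ffun C -> rat} := [ffun a => R a + (U (BR (qof R)) a - val R)].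
Definition Rs t := iter t step [ffun _ => 0].
Definition Ss t := BR (qof (Rs t)).

Lemma Ss_card t : #|Ss t| = K.
Proof. by have [] := BR_spec (@qof_ge0 (Rs t)) (qof_sum (Rs t)). Qed.

Lemma val_le R : val R <= B0.
Proof. by have [] := BR_spec (@qof_ge0 R) (qof_sum R). Qed.

Lemma val_ge0 R : 0 <= val R.
Proof. by apply: sumr_ge0 => b _; rewrite mulr_ge0 ?qof_ge0. Qed.

Lemma val_leW R : val R <= W.
Proof.
rewrite -[W]mul1r -(qof_sum R) mulr_suml; apply: ler_sum => b _.
by apply: ler_wpM2l; rewrite ?qof_ge0.
Qed.

Lemma Rs_sum t a : Rs t a = \sum_(s < t) (U (Ss s) a - val (Rs s)).
Proof.
elim: t => [|t IH]; first by rewrite big_ord0 /Rs /= ffunE.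
by rewrite big_ord_recr /= -IH /Rs /= ffunE.
Qed.

Lemma pos_sq x y : pos (x + y) ^+ 2 <= (pos x + y) ^+ 2.
Proof.
rewrite /pos; case: (lerP 0 (x + y)) => h1; case: (lerP 0 x) => h2 //; try nra; by rewrite sqr_ge0.
Qed.

Lemma cross R : \sum_a pos (R a) * (U (BR (qof R)) a - val R) = 0.
Proof.
set S := BR (qof R).
under eq_bigr do rewrite mulrBr.
rewrite sumrB -mulr_suml /val /qof.
case: ifP => H.
  under [X in _ - _ * X]eq_bigr do rewrite ffunE mulrAC.
  rewrite -mulr_suml mulrCA divff ?gt_eqF // mulr1.
  by rewrite /S /qof H subrr.
have s0 : \sum_a pos (R a) = 0.
  apply/eqP; rewrite eq_le sumr_ge0 ?andbT => [|a _]; last by apply: pos_ge0.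
  by rewrite leNgt H.
rewrite s0 mul0r subr0; apply: big1 => a _.
by rewrite (@psumr_eq0P _ _ _ (fun a => pos (R a)) (fun a _ => pos_ge0 (R a)) s0 a) // mul0r.
Qed.

Definition Phi (R : {ffun C -> rat}) := \sum_a pos (R a) ^+ 2.

Lemma Phi_step R : Phi (step R) <= Phi R + #|C|%:R * W ^+ 2.
Proof.
rewrite /Phi.
apply: le_trans (_ : \sum_a (pos (R a) + (U (BR (qof R)) a - val R)) ^+ 2 <= _).
  by apply: ler_sum => a _; rewrite ffunE pos_sq.
have e : forall a, (pos (R a) + (U (BR (qof R)) a - val R)) ^+ 2 =
   pos (R a) ^+ 2 + 2%:R * (pos (R a) * (U (BR (qof R)) a - val R)) + (U (BR (qof R)) a - val R) ^+ 2.
  by move=> a; ring.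
under eq_bigr do rewrite e.
rewrite !big_split /= -mulr_sumr cross mulr0 addr0 lerD2l.
apply: le_trans (_ : \sum_a W ^+ 2 <= _).
  apply: ler_sum => a _.
  have h1 := U0 (BR (qof R)) a; have h2 := UW (BR (qof R)) a.
  have h3 := val_ge0 R; have h4 := val_leW R.
  nra.
by rewrite sumr_const mulr_natl.
Qed.

Lemma Phi_Rs t : Phi (Rs t) <= t%:R * (#|C|%:R * W ^+ 2).
Proof.
elim: t => [|t IH].
  rewrite /Phi /Rs /= mul0r le_eqVlt; apply/orP; left; apply/eqP.
  by apply: big1 => a _; rewrite ffunE /pos lexx expr0n.
have -> : Rs t.+1 = step (Rs t) by [].
apply: le_trans (Phi_step (Rs t)) _.
by rewrite -[t.+1]addn1 natrD mulrDl mul1r lerD2r.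
Qed.

Lemma RM_bound t a :
  \sum_(s < t) U (Ss s) a <= t%:R * B0 + pos (Rs t a) /\
  pos (Rs t a) ^+ 2 <= t%:R * (#|C|%:R * W ^+ 2).
Proof.
split; last first.
  apply: le_trans (Phi_Rs t); rewrite /Phi (bigD1 a) //= lerDl.
  by apply: sumr_ge0 => b _; rewrite sqr_ge0.
have e := Rs_sum t a.
have : \sum_(s < t) U (Ss s) a = Rs t a + \sum_(s < t) val (Rs s).
  by rewrite e -big_split /=; apply: eq_bigr => s _; rewrite subrK.
move=> ->.
have h1 : \sum_(s < t) val (Rs s) <= t%:R * B0.
  rewrite -[t in t%:R]card_ord mulr_natl -sumr_const.
  by apply: ler_sum => s _; apply: val_le.
have h2 : Rs t a <= pos (Rs t a) by rewrite /pos; case: ifP => // /negbT; rewrite -ltNge => /ltW.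
lra.
Qed.

End RM.

Lemma sum_bool_card (I : finType) (P : pred I) : (\sum_i (P i : nat) = #|[set i | P i]|)%N.
Proof.
rewrite -sum1_card [in RHS]big_mkcond /=; apply: eq_bigr => i _; rewrite inE.
by case: (P i).
Qed.

Lemma trunc_sum (n tau : nat) : (tau - n)%N = (\sum_(j < tau) (n <= j))%N.
Proof.
elim: tau => [|tau IH]; first by rewrite big_ord0.
rewrite big_ord_recr /= -IH; case: (leqP n tau) => h /=; lia.
Qed.

Lemma tri_sum (tau : nat) : (2 * \sum_(j < tau) j <= tau * tau)%N.
Proof.
elim: tau => [|tau IH]; first by rewrite big_ord0.
have e : (\sum_(i < tau.+1) i = \sum_(i < tau) i + tau)%N by rewrite big_ord_recr.
rewrite e; move: IH; set s := (\sum_(i < tau) i)%N; lia.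
Qed.

Section Quant.
Variables (V C : finType) (pref : V -> rel C).
Hypothesis Hel : election pref.
Variables (T : nat) (S : 'I_T -> {set C}).

Definition N v t := #|[set t' | Dset pref v (S t) \subset Dset pref v (S t')]|.

Lemma cnt v j : (#|[set t | (N v t <= j)%N]| <= j)%N.
Proof.
set A := [set t | (N v t <= j)%N].
case: (pickP (mem A)) => [t0 t0A|H]; last by rewrite (eq_card0 H).
case: (arg_maxnP (N v) t0A) => ts tsA tsmax.
have sub : A \subset [set t' | Dset pref v (S ts) \subset Dset pref v (S t')].
  apply/subsetP => t tA; rewrite inE.
  case/orP: (Dset_nested Hel v (S ts) (S t)) => // Hsub'.
  apply/negPn/negP => Hn.
  have : (N v ts < N v t)%N.
    apply: proper_card; apply/properP; split.
      apply/subsetP => x; rewrite !inE => Hx; exact: subset_trans Hsub' Hx.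
    by exists t; rewrite !inE ?subxx.
  by have := tsmax t tA; rewrite /= leqNgt => /negP.
apply: leq_trans (subset_leq_card sub) _.
by move: tsA; rewrite /A /mem /= inE.
Qed.

Lemma sum_trunc v tau : (2 * \sum_t (tau - N v t) <= tau * tau)%N.
Proof.
rewrite (eq_bigr _ (fun t _ => trunc_sum (N v t) tau)) exchange_big /=.
apply: leq_trans (tri_sum tau); rewrite leq_mul2l /=; apply: leq_sum => j _.
by rewrite sum_bool_card cnt.
Qed.

Lemma N_dom v a t : dom pref v a (S t) -> (N v t <= #|[set t' | dom pref v a (S t')]|)%N.
Proof.
move=> H; apply: subset_leq_card; apply/subsetP => t'; rewrite !inE => /subsetP sub.
by have := sub a; rewrite !inE; apply.
Qed.

End Quant.

Lemma ar_P2 (a K1 B0 W Z P : rat) : 0 <= a -> 0 <= B0 -> B0 * K1 = W -> a <= 2 * K1 ->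
  2 * a * Z = W -> P <= 2 * B0 + Z -> 2 * a * P <= 9 * W.
Proof.
move=> a0 B00 eB hK eZ hP.
have h1 : 2 * a * P <= 2 * a * (2 * B0 + Z) by apply: ler_wpM2l => //; lra.
have h2 : a * B0 <= 2 * K1 * B0 by apply: ler_wpM2r.
lra.
Qed.

Lemma ar_Q (k k2 Q Wp W : rat) : k2 * Q <= 9 * Wp -> Wp <= W / 4 -> k <= 2 * k2 + 1 ->
  0 <= Q -> 2 * (k - 1) * Q <= 9 * W.
Proof.
move=> h1 h2 h3 Q0.
have h4 : 2 * (k - 1) * Q <= 4 * k2 * Q by apply: ler_wpM2r => //; lra.
lra.
Qed.

Lemma ar_final (k P Q W : rat) : 10 <= k -> 0 <= P -> 0 <= Q -> 0 <= W ->
  2 * (k + 2) * P <= 9 * W -> 2 * (k - 1) * Q <= 9 * W -> k * (P + Q) <= 9 * W.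
Proof.
move=> hk P0 Q0 W0 hP hQ.
have hA : (k * (k - 1)) * (2 * (k + 2) * P) <= (k * (k - 1)) * (9 * W).
  by apply: ler_wpM2l => //; nra.
have hB : (k * (k + 2)) * (2 * (k - 1) * Q) <= (k * (k + 2)) * (9 * W).
  by apply: ler_wpM2l => //; nra.
have hW : 0 <= W * (k - 4) by apply: mulr_ge0 => //; lra.
have pos : 0 < 2 * (k + 2) * (k - 1) by nra.
rewrite -(ler_pM2l pos).
lra.
Qed.

Section Main.
Variables (V C : finType) (pref : V -> rel C).
Hypothesis Hel : election pref.

Lemma main_weighted k : (0 < k)%N -> (k <= #|C|)%N ->
  forall w : V -> rat, (forall v, 0 <= w v) ->
  exists S : {set C}, #|S| = k /\ forall a, k%:R * u pref w S a <= 9%:R * Wt w.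
Proof.
elim/ltn_ind: k => k IH k0 kC w w0.
have W0 : 0 <= Wt w by apply: sumr_ge0.
case: (leqP k 9) => hk.
  have [|S [_ cS]] := @pad C set0 k; first by rewrite cards0 kC.
  exists S; split => // a.
  have hu := u_leW pref S a w0.
  have hk' : k%:R <= 9%:R :> rat by rewrite ler_nat.
  have hk0 : 0 <= k%:R :> rat by [].
  nra.
have hh := odd_double_half k; have hb := leq_b1 (odd k); rewrite -muln2 in hh.
set k2 := k./2 in hh *.
set K := (k - k2)%N.
have k2pos : (0 < k2)%N by lia.
have k2lt : (k2 < k)%N by lia.
have HK : (K <= #|C|)%N by lia.
have Cn : (0 < #|C|)%N by lia.
set m := #|C|.
set tau := (8 * m * (k + 2) ^ 2)%N.
have taupos : (0 < tau)%N by rewrite /tau; lia.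
set T := (2 * tau)%N.
set W := Wt w.
set B0 := W / K.+1%:R.
have U0 : forall S a, 0 <= u pref w S a by move=> S a; apply: u_ge0.
have UW : forall S a, u pref w S a <= W by move=> S a; apply: u_leW.
have BRex : forall q : {ffun C -> rat}, (forall a, 0 <= q a) -> \sum_a q a = 1 ->
    exists S : {set C}, #|S| = K /\ \sum_a q a * u pref w S a <= B0.
  by move=> q q0 q1; apply: best_response.
pose Sl (t : 'I_T) := Ss (u pref w) B0 K t.
pose psi v t := ((tau - N pref Sl v t)%N)%:R / tau%:R : rat.
have taur : 0 < tau%:R :> rat by rewrite ltr0n.
have psi0 : forall v t, 0 <= psi v t by move=> v t; rewrite divr_ge0.
have psi1 : forall v t, psi v t <= 1.
  move=> v t; rewrite ler_pdivrMr // mul1r ler_nat; lia.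
have psisum : forall v, \sum_t psi v t <= tau%:R / 2%:R.
  move=> v; rewrite -mulr_suml -natr_sum.
  have := sum_trunc Hel Sl v tau.
  set s := (\sum_t _)%N => hs.
  have hs' : 2%:R * s%:R <= tau%:R * tau%:R :> rat by rewrite -!natrM ler_nat.
  rewrite ler_pdivrMr //; clear -hs'; lra.
have [t0 Ht0] : exists t0 : 'I_T, \sum_v w v * psi v t0 <= W / 4%:R.
  apply: (@avg_exists _ (fun _ => T%:R^-1) (fun t => \sum_v w v * psi v t) (W / 4%:R)).
  - by move=> _; rewrite invr_ge0.
  - rewrite sumr_const -[RHS](@mulVf _ T%:R); first by rewrite mulr_natr card_ord.
    by rewrite pnatr_eq0 /T; lia.
  apply: le_trans (_ : T%:R^-1 * (W * (tau%:R / 2%:R)) <= _).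
    rewrite -mulr_sumr exchange_big /=; apply: ler_wpM2l; first by rewrite invr_ge0.
    rewrite /W /Wt mulr_suml; apply: ler_sum => v _; rewrite -mulr_sumr.
    by apply: ler_wpM2l => //; apply: psisum.
  have -> : T%:R^-1 * (W * (tau%:R / 2%:R)) = W / 4%:R.
    by rewrite /T natrM; field; rewrite gt_eqF.
  by [].
pose w' v := w v * psi v t0.
have w'0 : forall v, 0 <= w' v by move=> v; rewrite mulr_ge0.
have [S2 [cS2 HS2]] := IH k2 k2lt k2pos (leq_trans (ltnW k2lt) kC) w' w'0.
set S1 := Sl t0.
have cS1 : #|S1| = K := Ss_card BRex Cn t0.
have [Sf [subf cSf]] : exists Sf : {set C}, S1 :|: S2 \subset Sf /\ #|Sf| = k.
  by apply: pad; rewrite kC andbT cardsU cS1 cS2 /K (subnK (ltnW k2lt)) leq_subr.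
exists Sf; split => // a.
have [hA hx2] := RM_bound U0 UW BRex Cn T a.
set x := pos _ in hA hx2.
have x0 : 0 <= x by apply: pos_ge0.
set P := (\sum_(t < T) u pref w (Sl t) a) / tau%:R.
set Q := u pref w' S2 a.
set uf := u pref w Sf a.
have Q0 : 0 <= Q by apply: u_ge0.
have P0 : 0 <= P by rewrite divr_ge0 // sumr_ge0.
have h1 : uf <= \sum_v w v * ((1 - psi v t0) * (dom pref v a S1)%:R) + Q.
  rewrite /uf /Q /u -big_split /=; apply: ler_sum => v _.
  have hp0 := psi0 v t0; have hp1 := psi1 v t0; have hw := w0 v.
  case E: (dom pref v a Sf) => /=; last first.
    rewrite mulr0; apply: addr_ge0; apply: mulr_ge0 => //; apply: mulr_ge0 => //.
    by rewrite subr_ge0.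
  have E1 : dom pref v a S1 := dom_sub (subset_trans (subsetUl _ _) subf) E.
  have E2 : dom pref v a S2 := dom_sub (subset_trans (subsetUr _ _) subf) E.
  by rewrite E1 E2 /= /w' !mulr1 mulrBr mulr1 subrK.
have ecard : forall v, (#|[set t' | dom pref v a (Sl t')]|%:R : rat) = \sum_t (dom pref v a (Sl t))%:R.
  by move=> v; rewrite -sum_bool_card natr_sum.
have h2 : \sum_v w v * ((1 - psi v t0) * (dom pref v a S1)%:R) <= P.
  apply: le_trans (_ : \sum_v w v * ((\sum_t (dom pref v a (Sl t))%:R) / tau%:R) <= _).
    apply: ler_sum => v _; apply: ler_wpM2l => //; rewrite -ecard.
    case E: (dom pref v a S1) => /=; last by rewrite mulr0 divr_ge0.
    rewrite mulr1.
    have hN := N_dom E.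
    apply: le_trans (_ : (N pref Sl v t0)%:R / tau%:R <= _); last first.
      by rewrite ler_pM2r ?invr_gt0 // ler_nat.
    rewrite /psi -(ler_pM2r taur) mulrBl mul1r !divfK ?gt_eqF //.
    have : (tau <= (tau - N pref Sl v t0) + N pref Sl v t0)%N by rewrite addnC -leq_subLR.
    rewrite -(ler_nat rat) natrD => hnn; clear -hnn; lra.
  rewrite /P /u exchange_big /= mulr_suml; apply: ler_sum => v _.
  by rewrite mulrA mulr_sumr.
have W0' : 0 <= W by [].
have hx : x <= tau%:R * W / (2 * (k + 2))%:R.
  set y := tau%:R * W / (2 * (k + 2))%:R.
  have y0 : 0 <= y by rewrite /y divr_ge0 // mulr_ge0.
  have ey : y ^+ 2 = T%:R * (m%:R * W ^+ 2).
    rewrite /y /T /tau !natrM; field.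
    by rewrite -natrD pnatr_eq0 addn2.
  by rewrite -(ler_sqr (R:=rat)) ?nnegrE // ey.
have hP : P <= 2%:R * B0 + W / (2 * (k + 2))%:R.
  rewrite /P ler_pdivrMr //.
  have hA' : \sum_(t < T) u pref w (Sl t) a <= T%:R * B0 + x := hA.
  move: hA'; rewrite /T natrM => hA'.
  move: hx; rewrite -mulrA => hx.
  set Z := W / (2 * (k + 2))%:R in hx *.
  clear -hA' hx; lra.
have B00 : 0 <= B0 by rewrite /B0 divr_ge0.
have eB : B0 * K.+1%:R = W by rewrite /B0 divfK // pnatr_eq0.
have hKk : (k + 2)%:R <= 2 * K.+1%:R :> rat.
  by rewrite -natrM ler_nat; rewrite /K; clear -hh hb k2lt; lia.
have eI : 2 * (k + 2)%:R * (W / (2 * (k + 2))%:R) = W.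
  by rewrite -natrM mulrC divfK // pnatr_eq0 muln_eq0 addn2.
have hP2 := ar_P2 (ler0n _ _) B00 eB hKk eI hP.
have hW' : Wt w' <= W / 4 by [].
have hk2 : k%:R <= 2 * k2%:R + 1 :> rat.
  by rewrite -natrM natr1 ler_nat; clear -hh hb; lia.
have hQ := ar_Q (HS2 a) hW' hk2 Q0.
have hk10 : 10 <= k%:R :> rat by rewrite ler_nat.
have hP2' : 2 * (k%:R + 2) * P <= 9 * W by rewrite -natrD.
have hF := ar_final hk10 P0 Q0 W0 hP2' hQ.
apply: le_trans hF; apply: ler_wpM2l => //.
by apply: le_trans h1 _; rewrite lerD2r.
Qed.

End Main.

Unset Implicit Arguments.


Lemma alpha_bound (n d : nat) : (9 * d < n)%N -> (0 < d)%N -> 9 < ((n%:Z)%:~R / (d%:Z)%:~R : rat).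
Proof.
move=> h d0; rewrite !pmulrn ltr_pdivlMr ?ltr0n //.
by rewrite -natrM ltr_nat.
Qed.
Lemma final_ineq (c n kk al : rat) : 0 < n -> 0 < kk -> 9 < al -> kk * c <= 9 * n -> c / n < al / kk.
Proof.
move=> n0 k0 ha h.
rewrite ltr_pdivrMr // mulrAC ltr_pdivlMr // mulrC.
apply: le_lt_trans h _; rewrite ltr_pM2r //.
Qed.

Theorem theorem2 (V C : finType) (pref : V -> rel C) (k : nat) :
  election pref -> (0 < #|V|)%N -> (0 < k)%N -> (k <= #|C|)%N ->
  exists S : {set C}, #|S| = k /\
    undominated pref (((98217%:Z)%:~R / (10000%:Z)%:~R) / k%:R) S.
Proof.
move=> Hel V0 k0 kC.
have [S [cS HS]] := @main_weighted V C pref Hel k k0 kC (fun _ => 1) (fun _ => ler01).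
exists S; split; first exact: cS.
move=> a.
have ha := @alpha_bound 98217 10000 erefl erefl.
rewrite /dom_frac; apply: (@final_ineq _ _ _ _ _ _ ha).
- by rewrite ltr0n.
- by rewrite ltr0n.
have := HS a.
have -> : u pref (fun _ => 1) S a = (#|[set v | prefers_to_set pref v a S]|)%:R.
  by rewrite /u -sum_bool_card natr_sum; apply: eq_bigr => v _; rewrite mul1r.
have -> : Wt (fun _ : V => (1 : rat)) = #|V|%:R.
  by rewrite /Wt sumr_const.
by [].
Qed.
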